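(* Let $B\colon\mathbf{Set}\to\mathbf{Set}$ be a functor, $\Lambda$ a set, $(\tau_\lambda\colon B\mathbb{R}\to\mathbb{R})_{\lambda\in\Lambda}$ arbitrary functions, and $x\colon X\to BX$ a coalgebra. Every entourage of the logical uniformity of $x$ is an entourage of the bisimulation uniformity of $x$. In particular, for every formula $\varphi$, $[\![\varphi]\!]_x\colon X\to\mathbb{R}$ is uniformly continuous with respect to the bisimulation uniformity.
   Context: For a set $Y$ and a family $F$ of functions $Y\to\mathbb{R}$, let $\mathscr{U}(F)$ denote the coarsest uniformity on $Y$ making every $f\in F$ uniformly continuous into $\mathbb{R}$ with the Euclidean uniformity $\mathscr{U}_e$. Formulas: $\varphi::=1\mid\min(\varphi_1,\varphi_2)\mid r+\varphi\mid r\times\varphi\ (r\in\mathbb{R})\mid\heartsuit_\lambda\varphi$; semantics $[\![1]\!]=1$, $\min$ pointwise, $[\![r+\varphi]\!]=r+[\![\varphi]\!]$, $[\![r\times\varphi]\!]=r[\![\varphi]\!]$, $[\![\heartsuit_\lambda\varphi]\!]_x=\tau_\lambda\circ B[\![\varphi]\!]_x\circ x$. The logical uniformity of $x$ is $\mathscr{U}(\{[\![\varphi]\!]_x\mid\varphi\})$. For a uniformity $\mathscr{U}$ on $X$, let $\Phi(\mathscr{U})=\mathscr{U}(\{\tau_\lambda\circ Bh\circ x\mid\lambda\in\Lambda,\ h\colon(X,\mathscr{U})\to(\mathbb{R},\mathscr{U}_e)$ uniformly continuous$\})$. Uniformities on $X$ are ordered by $\mathscr{U}\sqsubseteq\mathscr{V}$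 iff $\mathscr{U}\supseteq\mathscr{V}$ (finer is smaller); the bisimulation uniformity is the $\sqsubseteq$-greatest fixed point of $\Phi$. *)

(* Defs.v *)
From Stdlib Require Import Reals.
Open Scope R_scope.

Definition entourage (Y : Type) := Y -> Y -> Prop.
Definition unif (Y : Type) := entourage Y -> Prop.

Definition is_uniformity {Y : Type} (U : unif Y) : Prop :=
  U (fun _ _ => True) /\
  (forall E F : entourage Y, U E -> (forall a b, E a b -> F a b) -> U F) /\
  (forall E F : entourage Y, U E -> U F -> U (fun a b => E a b /\ F a b)) /\
  (forall E : entourage Y, U E -> forall a, E a a) /\
  (forall E : entourage Y, U E -> U (fun a b => E b a)) /\
  (forall E : entourage Y, U E ->
     exists F : entourage Y, U F /\
       (forall a b c, F a b -> F b c -> E a c)).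

Definition euclid_unif : unif R :=
  fun E => exists eps, 0 < eps /\ forall a b, Rabs (a - b) < eps -> E a b.

Definition unif_cont {Y Z : Type} (U : unif Y) (V : unif Z) (f : Y -> Z) : Prop :=
  forall E : entourage Z, V E -> U (fun a b => E (f a) (f b)).

Definition unif_gen {Y : Type} (F : (Y -> R) -> Prop) : unif Y :=
  fun E => forall U : unif Y, is_uniformity U ->
             (forall f, F f -> unif_cont U euclid_unif f) -> U E.

Definition functor_laws {B : Type -> Type}
  (Bmap : forall A C : Type, (A -> C) -> B A -> B C) : Prop :=
  (forall (A : Type) (t : B A), Bmap A A (fun a => a) t = t) /\
  (forall (A C D : Type) (f : A -> C) (g : C -> D) (t : B A),
      Bmap A D (fun a => g (f a)) t = Bmap C D g (Bmap A C f t)).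

Inductive formula (Lam : Type) : Type :=
| FOne : formula Lam
| FMin : formula Lam -> formula Lam -> formula Lam
| FAdd : R -> formula Lam -> formula Lam
| FMul : R -> formula Lam -> formula Lam
| FHeart : Lam -> formula Lam -> formula Lam.

Fixpoint sem {B : Type -> Type} (Bmap : forall A C : Type, (A -> C) -> B A -> B C)
  {Lam : Type} (tau : Lam -> B R -> R) {X : Type} (x : X -> B X)
  (phi : formula Lam) : X -> R :=
  match phi with
  | FOne _ => fun _ => 1
  | FMin _ p q => fun s => Rmin (sem Bmap tau x p s) (sem Bmap tau x q s)
  | FAdd _ r p => fun s => r + sem Bmap tau x p s
  | FMul _ r p => fun s => r * sem Bmap tau x p s
  | FHeart _ l p => fun s => tau l (Bmap X R (sem Bmap tau x p) (x s))
  end.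

Definition logical_unif {B : Type -> Type}
  (Bmap : forall A C : Type, (A -> C) -> B A -> B C)
  {Lam : Type} (tau : Lam -> B R -> R) {X : Type} (x : X -> B X) : unif X :=
  unif_gen (fun f => exists phi : formula Lam, f = sem Bmap tau x phi).

Definition PhiOp {B : Type -> Type}
  (Bmap : forall A C : Type, (A -> C) -> B A -> B C)
  {Lam : Type} (tau : Lam -> B R -> R) {X : Type} (x : X -> B X)
  (U : unif X) : unif X :=
  unif_gen (fun g => exists (l : Lam) (h : X -> R),
                unif_cont U euclid_unif h /\ g = fun s => tau l (Bmap X R h (x s))).

Definition is_fixpoint {X : Type} (Phi : unif X -> unif X) (U : unif X) : Prop :=
  is_uniformity U /\ forall E, Phi U E <-> U E.

(* W is the ⊑-greatest fixed point, where U ⊑ V iff U ⊇ V: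
   every fixed point V satisfies V ⊑ W, i.e. W ⊆ V (W is the coarsest). *)
Definition is_greatest_fixpoint {X : Type} (Phi : unif X -> unif X) (W : unif X) : Prop :=
  is_fixpoint Phi W /\
  forall V, is_fixpoint Phi V -> forall E, W E -> V E.

(* Main.v *)
Require Import Defs.
From Stdlib Require Import Reals.
From Stdlib Require Import Lra.
Open Scope R_scope.

Lemma pre_ball {X : Type} (W : unif X) (f : X -> R) eps :
  unif_cont W euclid_unif f -> 0 < eps ->
  W (fun a b => Rabs (f a - f b) < eps).
Proof.
  intros H He. apply (H (fun u v => Rabs (u - v) < eps)).
  exists eps; split; auto.
Qed.

Lemma min_lip a b c d eps :
  Rabs (a - c) < eps -> Rabs (b - d) < eps -> Rabs (Rmin a b - Rmin c d) < eps.
Proof.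
  intros H1 H2. apply Rabs_def2 in H1. apply Rabs_def2 in H2.
  unfold Rmin; destruct (Rle_dec a b); destruct (Rle_dec c d);
  apply Rabs_def1; lra.
Qed.

Theorem mainTheorem11
  (B : Type -> Type) (Bmap : forall A C : Type, (A -> C) -> B A -> B C)
  (HB : functor_laws Bmap)
  (Lam : Type) (tau : Lam -> B R -> R)
  (X : Type) (x : X -> B X)
  (W : unif X) (HW : is_greatest_fixpoint (PhiOp Bmap tau x) W) :
  (forall E, logical_unif Bmap tau x E -> W E) /\
  (forall phi : formula Lam, unif_cont W euclid_unif (sem Bmap tau x phi)).
Proof.
  destruct HW as [[HU Hfix] _].
  pose proof HU as [HT [Hup [Hint _]]].
  assert (P2 : forall phi : formula Lam, unif_cont W euclid_unif (sem Bmap tau x phi)).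
  { induction phi as [| p IHp q IHq | r p IHp | r p IHp | l p IHp]; intros E [eps [He HE]].
    - apply (Hup _ _ HT). intros; simpl. apply HE. rewrite Rminus_diag, Rabs_R0; auto.
    - apply (Hup _ _ (Hint _ _ (pre_ball W _ eps IHp He) (pre_ball W _ eps IHq He))).
      intros a b [H1 H2]. apply HE. simpl. apply min_lip; auto.
    - apply (Hup _ _ (pre_ball W _ eps IHp He)).
      intros a b H. apply HE. simpl.
      replace (r + sem Bmap tau x p a - (r + sem Bmap tau x p b))
        with (sem Bmap tau x p a - sem Bmap tau x p b) by ring. auto.
    - destruct (Req_dec r 0) as [Hr|Hr].
      + apply (Hup _ _ HT). intros; simpl. apply HE. subst r.
        rewrite !Rmult_0_l, Rminus_diag, Rabs_R0; auto.
      + assert (Hr' : 0 < Rabs r) by (apply Rabs_pos_lt; auto).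
        apply (Hup _ _ (pre_ball W _ (eps / Rabs r) IHp
                          ltac:(apply Rdiv_lt_0_compat; auto))).
        intros a b H. apply HE. simpl.
        rewrite <- Rmult_minus_distr_l, Rabs_mult.
        apply (Rmult_lt_compat_l (Rabs r)) in H; auto.
        replace (Rabs r * (eps / Rabs r)) with eps in H by (field; lra). auto.
    - apply (proj1 (Hfix _)). intros U HUu HF.
      apply (HF _ (ex_intro _ l (ex_intro _ (sem Bmap tau x p) (conj IHp eq_refl)))).
      exists eps; split; auto. }
  split; auto.
  intros E HE. apply HE; auto.
  intros f [phi ->]. apply P2.
Qed.
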